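(* If a graph $G$ contains a vertex of degree at least four that is contained in at most one cycle of $G$, then $G\notin\mathcal{G}^{\rm SSP}$.
   Context: All graphs are finite, simple, undirected. For a graph $G$ on $\{1,\ldots,n\}$, $\mathcal{S}(G)$ is the set of real symmetric $n\times n$ matrices $A=(a_{ij})$ with $a_{ij}\neq0$ iff $\{i,j\}\in E(G)$ for $i\neq j$ (diagonal arbitrary). A real symmetric $A$ has the strong spectral property (SSP) if the only real symmetric $X$ with $A\circ X=0$, $I\circ X=0$, $AX-XA=0$ is $X=0$ ($\circ$ = entrywise product). $\mathcal{G}^{\rm SSP}$ is the set of graphs $G$ such that every matrix in $\mathcal{S}(G)$ has the SSP. *)

(* Defs.v *)
From HB Require Import structures.
From mathcomp Require Import all_boot all_order all_algebra.
From mathcomp Require Import Rstruct.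
From Stdlib Require Import Rdefinitions.
Set Implicit Arguments. Unset Strict Implicit. Unset Printing Implicit Defensive.
Import Order.TTheory GRing.Theory Num.Theory.
Local Open Scope ring_scope.

Definition simple_graph (n : nat) (e : rel 'I_n) : Prop :=
  symmetric e /\ irreflexive e.

Definition degree (n : nat) (e : rel 'I_n) (v : 'I_n) : nat :=
  #|[set u | e v u]|.

(* A cycle of G is given by a duplicate-free list of at least 3 vertices
   [v0; ...; v_{k-1}] with v_i ~ v_{i+1} and v_{k-1} ~ v0. *)
Definition is_cycle_seq (n : nat) (e : rel 'I_n) (s : seq 'I_n) : bool :=
  [&& leq 3 (size s), uniq s & cycle e s].

(* Edge set of the cycle given by s, as a set of ordered pairs (both
   orientations of each edge).  Two cycle sequences represent the same
   cycle (subgraph) iff they have the same edge set. *)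
Definition cycle_edges (n : nat) (s : seq 'I_n) : {set 'I_n * 'I_n} :=
  [set p | (next s p.1 == p.2) || (next s p.2 == p.1)] :&:
  [set p | (p.1 \in s) && (p.2 \in s)].

Definition on_at_most_one_cycle (n : nat) (e : rel 'I_n) (v : 'I_n) : Prop :=
  forall s1 s2 : seq 'I_n,
    is_cycle_seq e s1 -> is_cycle_seq e s2 -> v \in s1 -> v \in s2 ->
    cycle_edges s1 = cycle_edges s2.

Definition in_S (n : nat) (e : rel 'I_n) (A : 'M[R]_n) : Prop :=
  A^T = A /\ forall i j : 'I_n, i != j -> (A i j != 0) = e i j.

Definition hadamard (n : nat) (A B : 'M[R]_n) : 'M[R]_n :=
  \matrix_(i, j) (A i j * B i j).

Definition SSP (n : nat) (A : 'M[R]_n) : Prop :=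
  forall X : 'M[R]_n, X^T = X -> hadamard A X = 0 -> hadamard 1%:M X = 0 ->
    A *m X - X *m A = 0 -> X = 0.

Definition in_GSSP (n : nat) (e : rel 'I_n) : Prop :=
  forall A : 'M[R]_n, in_S e A -> SSP A.

(* Main.v *)
Require Import Defs.
From mathcomp Require Import all_boot all_order all_algebra.
From mathcomp Require Import Rstruct.
From HB Require Import structures.
From mathcomp Require Import zify.
From Stdlib Require Import Rdefinitions.
Set Implicit Arguments. Unset Strict Implicit. Unset Printing Implicit Defensive.
Import Order.TTheory GRing.Theory Num.Theory.


Section Graph.
Variables (n : nat) (e : rel 'I_n) (v : 'I_n).
Hypothesis sg : simple_graph e.

Definition ev : rel 'I_n := fun s t => [&& e s t, s != v & t != v].
Definition Rs (a : 'I_n) : {set 'I_n} := [set t | [&& a != v, t != v & connect ev a t]].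

Lemma ev_sym : symmetric ev.
Proof. by case: sg => es _ s t; rewrite /ev es; case: (e t s); case: (s != v); case: (t != v). Qed.

Lemma R_v a : v \notin Rs a.
Proof. by rewrite inE eqxx andbF. Qed.

Lemma R_self a : a != v -> a \in Rs a.
Proof. by move=> av; rewrite inE av connect0. Qed.

Lemma R_sym a b : b \in Rs a -> a \in Rs b.
Proof.
rewrite !inE => /and3P[av bv c]; rewrite av bv /=.
by rewrite (sym_connect_sym ev_sym).
Qed.

Lemma R_trans a b c : b \in Rs a -> c \in Rs b -> c \in Rs a.
Proof.
rewrite !inE => /and3P[av bv c1] /and3P[_ cv c2]; rewrite av cv /=.
exact: connect_trans c1 c2.
Qed.

Lemma R_const a s t : e s t -> s != v -> t != v -> (s \in Rs a) = (t \in Rs a).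
Proof.
move=> est sv tv.
have H : forall s t, ev s t -> s \in Rs a -> t \in Rs a.
  move=> s' t' h; rewrite !inE => /and3P[av _ c]; rewrite av /=.
  have /and3P[_ _ tv'] := h; rewrite tv' /=.
  exact: connect_trans c (connect1 h).
have h1 : ev s t by rewrite /ev est sv tv.
apply/idP/idP; first exact: H.
by apply: H; rewrite ev_sym.
Qed.


Lemma path_nv a p : a != v -> path ev a p -> forall t, t \in a :: p -> t != v.
Proof.
elim: p a => [|b p IH] a av /=; first by move=> _ t; rewrite inE => /eqP->.
move=> /andP[/and3P[_ _ bv] pth] t; rewrite inE => /orP[/eqP->//|]; exact: IH.
Qed.

Lemma mkcycle a b : e v a -> e v b -> b \in Rs a -> a != b ->
  exists s, [/\ is_cycle_seq e s, v \in s &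
     forall c, ((v, c) \in cycle_edges s) = (c == a) || (c == b)].
Proof.
case: sg => esym eirr.
move=> eva evb; rewrite inE => /and3P[av bv /connectP[p pth bE]].
move: evb bv; rewrite bE => evb bv ab.
move: evb bv ab; case/shortenP: pth => p' pth' uq _ evb bv ab.
set s := v :: a :: p'.
have nv := path_nv av pth'.
have vs : v \notin a :: p' by apply/negP => /nv; rewrite eqxx.
have us : uniq s by rewrite /s cons_uniq vs uq.
have p'n : (0 < size p')%N.
  by move: ab; case: (p') => //=; rewrite eqxx.
have cyc : cycle e s.
  rewrite /s /cycle rcons_cons /= eva /= rcons_path esym evb andbT.
  by apply: (sub_path _ pth') => x y /and3P[].
have nextv : next s v = a by rewrite /s /= eqxx.
have nextb : next s (last a p') = v.
  rewrite next_nth.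
  have -> : last a p' \in s by exact: (mem_last v (a :: p')).
  rewrite /s -[last a p']/(last v (a :: p')) index_last //.
  by rewrite nth_default.
exists s; split.
- by rewrite /is_cycle_seq /s us cyc /= !ltnS p'n.
- exact: mem_head.
move=> c; rewrite /cycle_edges in_setI !in_set; change ([&& (next s v == c) || (next s c == v), v \in s & c \in s] = ((c == a) || (c == last a p'))); rewrite nextv mem_head andTb.
apply/idP/idP.
  case/andP => /orP[/eqP<-|/eqP h] cs; first by rewrite eqxx.
  have h1 := prev_next us c; have h2 := prev_next us (last a p').
  by rewrite h in h1; rewrite nextb h1 in h2; rewrite h2 eqxx orbT.
case/orP => /eqP->; first by rewrite eqxx /= /s !inE eqxx orbT.
by rewrite nextb eqxx orbT /=; exact: (mem_last v (a :: p')).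
Qed.

Hypothesis oc : on_at_most_one_cycle e v.

Lemma pairL a b c d : e v a -> e v b -> a != b -> b \in Rs a ->
  e v c -> e v d -> c != d -> d \in Rs c -> (c == a) || (c == b).
Proof.
move=> eva evb ab bRa evc evd cd dRc.
have [s1 [cy1 vs1 E1]] := mkcycle eva evb bRa ab.
have [s2 [cy2 vs2 E2]] := mkcycle evc evd dRc cd.
by rewrite -E1 (oc cy1 cy2 vs1 vs2) E2 eqxx.
Qed.

End Graph.

Local Open Scope ring_scope.

Section Gen.
Variables (n : nat) (e : rel 'I_n) (v : 'I_n) (w : 'I_n -> R).
Hypothesis sg : simple_graph e.
Hypothesis wnz : forall j, e v j -> w j != 0.

Definition Amx : 'M[R]_n := \matrix_(i, j)
  if i == j then (if i == v then 0 else - (#|[set k | e i k && (k != v)]|%:R))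
  else if e i j then (if i == v then w j else if j == v then w i else 1) else 0.

Definition const_vec (x : 'I_n -> R) :=
  [/\ x v = 0, (forall s t, e s t -> s != v -> t != v -> x s = x t) &
      \sum_j (if e v j then w j * x j else 0) = 0].

Lemma Amx_sym : Amx^T = Amx.
Proof.
case: sg => esym eirr.
apply/matrixP => i j; rewrite !mxE (eq_sym j i).
case: eqP => [->|ij] //; rewrite (esym j i).
case: (e i j) => //.
case: (eqVneq i v) => [->|iv]; case: (eqVneq j v) => [jv|jv] //.
by move: ij; rewrite jv.
Qed.

Lemma Amx_S : in_S e Amx.
Proof.
split; first exact: Amx_sym.
case: sg => esym eirr.
move=> i j ij; rewrite mxE (negbTE ij).
case eij: (e i j); last by rewrite eqxx.
case: (eqVneq i v) => [iv|iv].
  by apply: wnz; rewrite -iv.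
case: (eqVneq j v) => [jv|jv]; last by rewrite oner_neq0.
by apply: wnz; rewrite -jv esym.
Qed.

Lemma Amx_ker x : const_vec x -> Amx *m (\col_i x i) = 0.
Proof.
case: sg => esym eirr.
case=> xv xc xs; apply/matrixP => i k; rewrite (ord1 k) !mxE.
case: (eqVneq i v) => [->|iv].
  rewrite -[RHS]xs; apply: eq_bigr => j _; rewrite !mxE.
  case: (eqVneq v j) => [<-|vj]; first by rewrite xv eirr mulr0.
  by case: (e v j); rewrite ?mul0r // eqxx.
transitivity (\sum_j ((if j == i then
    - (#|[set k | e i k && (k != v)]|%:R) * x i else 0)
    + (if e i j && (j != v) then x i else 0))).
  apply: eq_bigr => j _; rewrite !mxE (eq_sym i j).
  case: (eqVneq j i) => [->|ji]; first by rewrite (negbTE iv) eirr addr0.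
  rewrite add0r (negbTE iv).
  case eij: (e i j) => /=; last by rewrite mul0r.
  case: (eqVneq j v) => [->|jv]; first by rewrite xv mulr0.
  by rewrite mul1r (xc i j).
rewrite big_split /= -big_mkcond /= big_pred1_eq -big_mkcond /=.
rewrite (eq_bigl (fun j => j \in [set k | e i k && (k != v)])); last by move=> j; rewrite inE.
rewrite sumr_const.
by rewrite mulNr mulr_natl addNr.
Qed.

Lemma generic x y : const_vec x -> const_vec y ->
  (forall i, x i * y i = 0) -> (exists i j, x i != 0 /\ y j != 0) ->
  ~ in_GSSP e.
Proof.
move=> cx cy xy [i0 [j0 [xi0 yj0]]] H.
have := H _ Amx_S.
set xc := \col_i x i; set yc := \col_i y i.
pose X := xc *m yc^T + yc *m xc^T.
have XE : forall i j, X i j = x i * y j + y i * x j.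
  by move=> i j; rewrite !mxE !big_ord1 !mxE.
have [xv xc' _] := cx; have [yv yc' _] := cy.
case: sg => esym eirr.
move=> /(_ X) HX.
have : X i0 j0 = 0.
  rewrite HX ?mxE //.
  - by apply/matrixP => i j; rewrite mxE !XE addrC (mulrC (x j)) (mulrC (y j)).
  - apply/matrixP => i j; rewrite [hadamard _ _ i j]mxE XE !mxE.
    case: (eqVneq i j) => [<-|ij]; first by rewrite (mulrC (y i)) xy addr0 mulr0.
    case eij: (e i j); last by rewrite mul0r.
    case: (eqVneq i v) => [->|iv]; first by rewrite xv yv !mul0r add0r mulr0.
    case: (eqVneq j v) => [->|jv]; first by rewrite xv yv !mulr0 add0r mulr0.
    by rewrite (xc' i j) // (yc' i j) // (mulrC (y j)) xy addr0 mulr0.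
  - apply/matrixP => i j; rewrite [hadamard _ _ i j]mxE XE !mxE.
    case: (eqVneq i j) => [<-|ij]; last by rewrite mul0r.
    by rewrite (mulrC (y i)) xy addr0 mulr0.
  - rewrite /X mulmxDr mulmxDl !mulmxA (Amx_ker cx) (Amx_ker cy) !mul0mx.
    have ky : yc^T *m Amx = 0 by rewrite -[Amx]Amx_sym -trmx_mul (Amx_ker cy) trmx0.
    have kx : xc^T *m Amx = 0 by rewrite -[Amx]Amx_sym -trmx_mul (Amx_ker cx) trmx0.
    by rewrite -!mulmxA ky kx !mulmx0 !addr0 subrr.
rewrite XE.
have yi0 : y i0 = 0.
  by have /eqP := xy i0; rewrite mulf_eq0 (negbTE xi0) /= => /eqP.
have xj0 : x j0 = 0.
  by have /eqP := xy j0; rewrite mulf_eq0 (negbTE yj0) orbF => /eqP.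
rewrite yi0 mul0r addr0 => /eqP; rewrite mulf_eq0 (negbTE xi0) (negbTE yj0).
done.
Qed.
End Gen.



Lemma bool4 (T : pzRingType) (bA bB bC bD : bool) : (bA -> bC -> False) -> (bA -> bD -> False) ->
  (bB -> bC -> False) -> (bB -> bD -> False) ->
  (bA%:R - bB%:R) * (bC%:R - bD%:R) = 0 :> T.
Proof.
case: bA; case: bB; case: bC; case: bD => H1 H2 H3 H4;
  rewrite ?subrr ?mulr0 ?mul0r //; exfalso;
  by [apply: H1|apply: H2|apply: H3|apply: H4].
Qed.

Section Vecs.
Variables (n : nat) (e : rel 'I_n) (v : 'I_n) (w : 'I_n -> R).
Hypothesis sg : simple_graph e.

Lemma nev a : e v a -> a != v.
Proof. by case: sg => _ eirr; apply: contraTneq => ->; rewrite eirr. Qed.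

Lemma diff_vec a b : e v a -> e v b -> a != b -> w a = w b ->
  (forall j, e v j -> j \in Rs e v a -> j = a) ->
  (forall j, e v j -> j \in Rs e v b -> j = b) ->
  const_vec e v w (fun i => (i \in Rs e v a)%:R - (i \in Rs e v b)%:R).
Proof.
move=> eva evb ab wab ha hb; split.
- by rewrite !(negbTE (R_v _ _ _)) subrr.
- by move=> s t est sv tv; rewrite !(R_const sg _ est sv tv).
rewrite (eq_bigr (fun j => (if j == a then w a else 0) - (if j == b then w b else 0))).
  by rewrite sumrB -!big_mkcond !big_pred1_eq wab subrr.
move=> j _.
have aRa := R_self e (nev eva); have bRb := R_self e (nev evb).
case: (eqVneq j a) => [->|ja].
  have aRb : a \in Rs e v b = false.
    by apply/negbTE/negP => /(hb _ eva) /eqP; rewrite (negbTE ab).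
  by rewrite eva aRa aRb (negbTE ab) mulr1n mulr0n !subr0 mulr1.
case: (eqVneq j b) => [->|jb].
  have bRa : b \in Rs e v a = false.
    by apply/negbTE/negP => /(ha _ evb) /eqP; rewrite eq_sym (negbTE ab).
  by rewrite evb bRb bRa mulr1n mulr0n !sub0r mulrN1.
case evj: (e v j); last by rewrite subrr.
have -> : j \in Rs e v a = false by apply/negbTE/negP => /(ha _ evj) /eqP; rewrite (negbTE ja).
have -> : j \in Rs e v b = false by apply/negbTE/negP => /(hb _ evj) /eqP; rewrite (negbTE jb).
by rewrite subrr mulr0.
Qed.

Lemma single_vec p q : e v p -> e v q -> p != q -> q \in Rs e v p ->
  w p + w q = 0 ->
  (forall j, e v j -> j \in Rs e v p -> (j == p) || (j == q)) ->
  const_vec e v w (fun i => (i \in Rs e v p)%:R).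
Proof.
move=> evp evq pq qRp wpq hp; split.
- by rewrite !(negbTE (R_v _ _ _)).
- by move=> s t est sv tv; rewrite !(R_const sg _ est sv tv).
rewrite (eq_bigr (fun j => (if j == p then w p else 0) + (if j == q then w q else 0))).
  by rewrite big_split /= -!big_mkcond !big_pred1_eq wpq.
move=> j _.
have pRp := R_self e (nev evp).
case: (eqVneq j p) => [->|jp].
  by rewrite evp pRp (negbTE pq) addr0 mulr1.
case: (eqVneq j q) => [->|jq].
  by rewrite evq qRp add0r mulr1.
case evj: (e v j); last by rewrite addr0.
have -> : j \in Rs e v p = false.
  by apply/negbTE/negP => /(hp _ evj); rewrite (negbTE jp) (negbTE jq).
by rewrite mulr0 addr0.
Qed.
End Vecs.

Lemma disj n (e : rel 'I_n) v : simple_graph e -> forall z c i,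
  z \notin Rs e v c -> i \in Rs e v c -> i \in Rs e v z -> False.
Proof.
move=> sg z c i zc ic iz; move/negP: zc; apply.
exact: R_trans ic (R_sym sg iz).
Qed.

Lemma main_aux (n : nat) (e : rel 'I_n) (v : 'I_n) :
  simple_graph e -> leq 4 (degree e v) -> on_at_most_one_cycle e v ->
  ~ in_GSSP e.
Proof.
move=> sg deg oc.
have pick2 : forall p q, exists a b, [/\ e v a, e v b, a != b,
    (a != p) && (a != q) & (b != p) && (b != q)].
  move=> p q.
  have h : leq 2 #|[set u | e v u] :\: [set p; q]|.
    rewrite cardsD.
    have := subset_leq_card (subsetIr [set u | e v u] [set p; q]); rewrite cards2.
    have : leq (p != q).+1 2 by case: (p != q).
    move: deg; rewrite /degree. lia.
  case/card_gt1P: h => a [b [ha hb ab]]; move: ha hb; rewrite !inE.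
  move=> /andP[ha1 ha2] /andP[hb1 hb2].
  by exists a, b; split; rewrite // -negb_or.
have L := pairL sg oc.
case: (boolP [exists p, exists q, [&& e v p, e v q, p != q & q \in Rs e v p]]).
  case/existsP => p /existsP [q /and4P[evp evq pq qRp]].
  have [a [b [eva evb ab /andP[ap aq] /andP[bp bq]]]] := pick2 p q.
  have good : forall z, e v z -> z != p -> z != q ->
      forall j, e v j -> j \in Rs e v z -> j = z.
    move=> z evz zp zq j evj jRz; apply/eqP; apply: contraTT isT => jz.
    have := L _ _ _ _ evp evq pq qRp evz evj; rewrite eq_sym => /(_ jz jRz).
    by rewrite (negbTE zp) (negbTE zq).
  have notin : forall z, e v z -> z != p -> z != q -> z \notin Rs e v p.
    move=> z evz zp zq; apply/negP => zRp.
    have := L _ _ _ _ evp evq pq qRp evz evp zp (R_sym sg zRp).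
    by rewrite (negbTE zp) (negbTE zq).
  pose w := fun j : 'I_n => if j == q then - GRing.one R else GRing.one R.
  have wnz : forall j, e v j -> w j != 0.
    by move=> j _; rewrite /w; case: (j == q); rewrite ?oppr_eq0 oner_eq0.
  have cx := single_vec (w := w) sg evp evq pq qRp.
  have cy := diff_vec (w := w) sg eva evb ab.
  apply: (generic sg wnz (cx _ _) (cy _ (good _ eva ap aq) (good _ evb bp bq))).
  - by rewrite /w eqxx (negbTE pq) addrN.
  - move=> j evj jRp; case: (eqVneq j p) => [->|jp]; first by [].
    by have := (L _ _ _ _ evp evq pq qRp evj evp jp (R_sym sg jRp)); rewrite (negbTE jp).
  - by rewrite /w (negbTE aq) (negbTE bq).
  - move=> i; have := @bool4 R (i \in Rs e v p) false (i \in Rs e v a) (i \in Rs e v b).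
    rewrite mulr0n subr0; apply => // h1 h2.
    + exact: (disj sg (notin _ eva ap aq) h1 h2).
    + exact: (disj sg (notin _ evb bp bq) h1 h2).
  - exists p, a; rewrite R_self ?(nev sg evp) // R_self ?(nev sg eva) //.
    have -> : a \in Rs e v b = false.
      by apply/negbTE/negP => /(good _ evb bp bq _ eva) /eqP; rewrite (negbTE ab).
    by rewrite subr0 oner_eq0.
move/existsPn => H.
have nopair : forall c d, e v c -> e v d -> c != d -> d \in Rs e v c -> False.
  by move=> c d evc evd cd dRc; have := H c; move/existsPn/(_ d); rewrite evc evd cd dRc.
have good : forall z, e v z -> forall j, e v j -> j \in Rs e v z -> j = z.
  move=> z evz j evj jRz; apply/eqP; apply: contraTT isT => jz.
  by exfalso; apply: (nopair z j) => //; rewrite eq_sym.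
have notin : forall c d, e v c -> e v d -> c != d -> d \notin Rs e v c.
  by move=> c d evc evd cd; apply/negP; apply: nopair.
have [a1 [a2 [ev1 ev2 a12 _ _]]] := pick2 v v.
have [a3 [a4 [ev3 ev4 a34 /andP[a31 a32] /andP[a41 a42]]]] := pick2 a1 a2.
pose w := fun j : 'I_n => GRing.one R.
have wnz : forall j, e v j -> w j != 0 by move=> j _; rewrite oner_eq0.
apply: (generic sg wnz (diff_vec (w := w) sg ev1 ev2 a12 erefl (good _ ev1) (good _ ev2))
                       (diff_vec (w := w) sg ev3 ev4 a34 erefl (good _ ev3) (good _ ev4))).
- move=> i; apply: bool4 => h1 h2.
  + by apply: (disj sg (notin _ _ ev1 ev3 _) h1 h2); rewrite eq_sym.
  + by apply: (disj sg (notin _ _ ev1 ev4 _) h1 h2); rewrite eq_sym.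
  + by apply: (disj sg (notin _ _ ev2 ev3 _) h1 h2); rewrite eq_sym.
  + by apply: (disj sg (notin _ _ ev2 ev4 _) h1 h2); rewrite eq_sym.
exists a1, a3; rewrite !R_self ?(nev sg ev1) ?(nev sg ev3) //.
rewrite (negbTE (notin _ _ ev2 ev1 _)) ?(negbTE (notin _ _ ev4 ev3 _)) 1?eq_sym //.
by split; rewrite mulr1n mulr0n subr0 eq_sym oner_eq0.
Qed.

Local Close Scope ring_scope.
Unset Implicit Arguments.

Theorem corollary2p7 (n : nat) (e : rel 'I_n) (v : 'I_n) :
  simple_graph e -> (4 <= degree e v)%N -> on_at_most_one_cycle e v ->
  ~ in_GSSP e.
Proof. exact: main_aux. Qed.
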